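(* Let $N\ge1$, $d_1,d_2,d_3,d_4\ge1$, $\kappa_1,\kappa_2\ge0$, and for $1\le j\le N$ let $B_j\in\mathbb C^{d_1\times d_2\times d_1\times d_2}$, $C_j\in\mathbb C^{d_3\times d_4\times d_3\times d_4}$ satisfy $[B_j]_{\alpha_1\beta_1\alpha_2\beta_2}=-\overline{[B_j]_{\alpha_2\beta_2\alpha_1\beta_1}}$ and $[C_j]_{\gamma_1\delta_1\gamma_2\delta_2}=-\overline{[C_j]_{\gamma_2\delta_2\gamma_1\delta_1}}$. Define $A_j\in\mathbb C^{d_1\times d_2\times d_3\times d_4\times d_1\times d_2\times d_3\times d_4}$ by $$[A_j]_{\alpha_1\beta_1\gamma_1\delta_1\alpha_2\beta_2\gamma_2\delta_2}=[B_j]_{\alpha_1\beta_1\alpha_2\beta_2}\delta_{\gamma_1\gamma_2}\delta_{\delta_1\delta_2}+[C_j]_{\gamma_1\delta_1\gamma_2\delta_2}\delta_{\alpha_1\alpha_2}\delta_{\beta_1\beta_2},$$ and take in the Lohe tensor model (rank $4$) the couplings $\kappa_{(0,1,1,1)}=\kappa_{(1,1,0,1)}=\kappa_1$, $\kappa_{(1,0,1,1)}=\kappa_{(1,1,1,0)}=\kappa_2$, and $\kappa_{i_*}=0$ for all other $i_*\in\{0,1\}^4$. Then: (1) If $\{(U_i,V_i)\}$ is a solution of the double matrix model (with these $B_j,C_j,\kappa_1,\kappa_2$), then $T_i(t):=U_i(t)\otimes V_i(t)$ is a (quadratically separable) solution of the Lohe tensor model with free flow tensors $A_i$. (2) If $\{T_i\}$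 is a solution of the Lohe tensor model with free flow tensors $A_i$ and initial data $T_i(0)=U_i^0\otimes V_i^0$, where $U_i^0\in\mathbb C^{d_1\times d_2}$, $V_i^0\in\mathbb C^{d_3\times d_4}$ have $\|U_i^0\|_F=\|V_i^0\|_F=1$, then there exist matrices $U_i(t)\in\mathbb C^{d_1\times d_2}$, $V_i(t)\in\mathbb C^{d_3\times d_4}$ of unit Frobenius norm with $T_i(t)=U_i(t)\otimes V_i(t)$ for all $t>0$, where $\{(U_i,V_i)\}$ is the solution of the double matrix model with $(U_i,V_i)(0)=(U_i^0,V_i^0)$.
   Context: $\langle A,B\rangle_F=\mathrm{tr}(A^\dagger B)$, $\|A\|_F=\sqrt{\langle A,A\rangle_F}$; $(U\otimes V)$ is the rank-4 tensor with $[U\otimes V]_{\alpha\beta\gamma\delta}=[U]_{\alpha\beta}[V]_{\gamma\delta}$. Repeated indices are summed. Double matrix model: for $U_j\in\mathbb C^{d_1\times d_2}$, $V_j\in\mathbb C^{d_3\times d_4}$, $\dot U_j=B_jU_j+\frac{\kappa_1}{N}\sum_k(\langle V_j,V_k\rangle_FU_kU_j^\dagger U_j-\langle V_k,V_j\rangle_FU_jU_k^\dagger U_j)+\frac{\kappa_2}{N}\sum_k(\langle V_j,V_k\rangle_FU_jU_j^\dagger U_k-\langle V_k,V_j\rangle_FU_jU_k^\dagger U_j)$, $\dot V_j=C_jV_j+\frac{\kappa_1}{N}\sum_k(\langle U_j,U_k\rangle_FV_kV_j^\dagger V_j-\langle U_k,U_j\rangle_FV_jV_k^\dagger V_j)+\frac{\kappa_2}{N}\sum_k(\langle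 U_j,U_k\rangle_FV_jV_j^\dagger V_k-\langle U_k,U_j\rangle_FV_jV_k^\dagger V_j)$, where $[B_jU_j]_{\alpha\beta}=[B_j]_{\alpha\beta\gamma\delta}[U_j]_{\gamma\delta}$, $[C_jV_j]_{\alpha\beta}=[C_j]_{\alpha\beta\gamma\delta}[V_j]_{\gamma\delta}$. Lohe tensor model for rank-$r$ tensors $T_j\in\mathbb C^{e_1\times\cdots\times e_r}$: for $i_*=(i_1,\dots,i_r)\in\{0,1\}^r$ write $\alpha_{*i_*}=(\alpha_{1i_1},\dots,\alpha_{ri_r})$, $\alpha_{*(1-i_* )}=(\alpha_{1(1-i_1)},\dots,\alpha_{r(1-i_r)})$, $\alpha_{*0},\alpha_{*1}$ similarly; with $T_c=\frac1N\sum_kT_k$, nonnegative couplings $\kappa_{i_*}$, and rank-$2r$ tensors $A_j$ with $\overline{[A_j]_{\alpha_{*0}\alpha_{*1}}}=-[A_j]_{\alpha_{*1}\alpha_{*0}}$, $\frac{d}{dt}[T_j]_{\alpha_{*0}}=[A_j]_{\alpha_{*0}\alpha_{*1}}[T_j]_{\alpha_{*1}}+\sum_{i_*\in\{0,1\}^r}\kappa_{i_*}\big([T_c]_{\alpha_{*i_*}}\overline{[T_j]_{\alpha_{*1}}}[T_j]_{\alpha_{*(1-i_* )}}-[T_j]_{\alpha_{*i_*}}\overline{[T_c]_{\alpha_{*1}}}[T_j]_{\alpha_{*(1-i_* )}}\big)$, summing over the indices $\alpha_{*1}$. A quadratically separable state is a solution of the form $T_i=U_i^1\otimes\cdots\otimes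 U_i^m$ with matrices $U_i^k$ of unit Frobenius norm. *)

(* Defs.v *)
From mathcomp Require Import all_boot all_order all_algebra.
From mathcomp Require Import reals topology normedtype derive.
From mathcomp Require Export complex.
Import Order.TTheory GRing.Theory Num.Theory.
Import numFieldNormedType.Exports.

Set Implicit Arguments.
Unset Strict Implicit.
Unset Printing Implicit Defensive.

Local Open Scope classical_set_scope.
Local Open Scope ring_scope.

Section Defs.
Variable R : realType.
Local Notation C := R[i].

Definition cderiv (f : R -> C) (t : R) (z : C) : Prop :=
  is_derive t (1 : R) (fun s => complex.Re (f s)) (complex.Re z) /\
  is_derive t (1 : R) (fun s => complex.Im (f s)) (complex.Im z).

Definition ccont0 (f : R -> C) : Prop :=
  (fun s => complex.Re (f s)) x @[x --> 0^'+] --> complex.Re (f 0) /\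
  (fun s => complex.Im (f s)) x @[x --> 0^'+] --> complex.Im (f 0).

Definition adjmx m n (A : 'M[C]_(m, n)) : 'M[C]_(n, m) :=
  \matrix_(i, j) Num.conj (A j i).

Definition frob m n (A B : 'M[C]_(m, n)) : C := \tr (adjmx A *m B).

Definition frob_norm m n (A : 'M[C]_(m, n)) : R :=
  Num.sqrt (complex.Re (frob A A)).

Definition tapp m n (B : 'I_m -> 'I_n -> 'I_m -> 'I_n -> C) (U : 'M[C]_(m, n))
  : 'M[C]_(m, n) :=
  \matrix_(a, b) \sum_(c < m) \sum_(d < n) B a b c d * U c d.

Definition dmm_rhs N m n p q (B : 'I_N -> 'I_m -> 'I_n -> 'I_m -> 'I_n -> C)
  (k1 k2 : R) (U : 'I_N -> 'M[C]_(m, n)) (V : 'I_N -> 'M[C]_(p, q)) (j : 'I_N)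
  : 'M[C]_(m, n) :=
  tapp (B j) (U j)
  + ((k1%:C)%C / N%:R) *: \sum_(k < N)
      (frob (V j) (V k) *: (U k *m adjmx (U j) *m U j)
       - frob (V k) (V j) *: (U j *m adjmx (U k) *m U j))
  + ((k2%:C)%C / N%:R) *: \sum_(k < N)
      (frob (V j) (V k) *: (U j *m adjmx (U j) *m U k)
       - frob (V k) (V j) *: (U j *m adjmx (U k) *m U j)).

Definition dmm_solution N d1 d2 d3 d4
  (B : 'I_N -> 'I_d1 -> 'I_d2 -> 'I_d1 -> 'I_d2 -> C)
  (Cj : 'I_N -> 'I_d3 -> 'I_d4 -> 'I_d3 -> 'I_d4 -> C) (k1 k2 : R)
  (U : 'I_N -> R -> 'M[C]_(d1, d2)) (V : 'I_N -> R -> 'M[C]_(d3, d4)) : Prop :=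
  (forall (j : 'I_N) (a : 'I_d1) (b : 'I_d2),
     ccont0 (fun s => U j s a b) /\
     forall t : R, 0 < t ->
       cderiv (fun s => U j s a b) t
         (dmm_rhs B k1 k2 (fun k => U k t) (fun k => V k t) j a b)) /\
  (forall (j : 'I_N) (c : 'I_d3) (d : 'I_d4),
     ccont0 (fun s => V j s c d) /\
     forall t : R, 0 < t ->
       cderiv (fun s => V j s c d) t
         (dmm_rhs Cj k1 k2 (fun k => V k t) (fun k => U k t) j c d)).

Definition tensor4 d1 d2 d3 d4 := 'I_d1 -> 'I_d2 -> 'I_d3 -> 'I_d4 -> C.
Definition tensor8 d1 d2 d3 d4 :=
  'I_d1 -> 'I_d2 -> 'I_d3 -> 'I_d4 -> 'I_d1 -> 'I_d2 -> 'I_d3 -> 'I_d4 -> C.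

Definition mxtensor d1 d2 d3 d4 (U : 'M[C]_(d1, d2)) (V : 'M[C]_(d3, d4))
  : tensor4 d1 d2 d3 d4 :=
  fun a b c d => U a b * V c d.

(** alpha_{r i_r}: index a (i_r = 0) or summation index b (i_r = 1). *)
Definition sel (T : Type) (i : bool) (a b : T) : T := if i then b else a.

(** Right-hand side of the rank-4 Lohe tensor model, at free index
    alpha_{*0} = (a1,a2,a3,a4), summing over alpha_{*1} = (b1,b2,b3,b4). *)
Definition lohe_rhs N d1 d2 d3 d4 (A : 'I_N -> tensor8 d1 d2 d3 d4)
  (kappa : bool -> bool -> bool -> bool -> R)
  (T : 'I_N -> tensor4 d1 d2 d3 d4) (j : 'I_N)
  (a1 : 'I_d1) (a2 : 'I_d2) (a3 : 'I_d3) (a4 : 'I_d4) : C :=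
  let Tc : tensor4 d1 d2 d3 d4 :=
    fun b1 b2 b3 b4 => N%:R^-1 * \sum_(k < N) T k b1 b2 b3 b4 in
  \sum_(b1 < d1) \sum_(b2 < d2) \sum_(b3 < d3) \sum_(b4 < d4)
     A j a1 a2 a3 a4 b1 b2 b3 b4 * T j b1 b2 b3 b4
  + \sum_(i1 : bool) \sum_(i2 : bool) \sum_(i3 : bool) \sum_(i4 : bool)
     ((kappa i1 i2 i3 i4)%:C)%C *
     \sum_(b1 < d1) \sum_(b2 < d2) \sum_(b3 < d3) \sum_(b4 < d4)
       (Tc (sel i1 a1 b1) (sel i2 a2 b2) (sel i3 a3 b3) (sel i4 a4 b4)
          * Num.conj (T j b1 b2 b3 b4)
          * T j (sel (~~ i1) a1 b1) (sel (~~ i2) a2 b2)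
                (sel (~~ i3) a3 b3) (sel (~~ i4) a4 b4)
        - T j (sel i1 a1 b1) (sel i2 a2 b2) (sel i3 a3 b3) (sel i4 a4 b4)
          * Num.conj (Tc b1 b2 b3 b4)
          * T j (sel (~~ i1) a1 b1) (sel (~~ i2) a2 b2)
                (sel (~~ i3) a3 b3) (sel (~~ i4) a4 b4)).

Definition lohe_solution N d1 d2 d3 d4 (A : 'I_N -> tensor8 d1 d2 d3 d4)
  (kappa : bool -> bool -> bool -> bool -> R)
  (T : 'I_N -> R -> tensor4 d1 d2 d3 d4) : Prop :=
  forall (j : 'I_N) (a1 : 'I_d1) (a2 : 'I_d2) (a3 : 'I_d3) (a4 : 'I_d4),
    ccont0 (fun s => T j s a1 a2 a3 a4) /\
    forall t : R, 0 < t ->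
      cderiv (fun s => T j s a1 a2 a3 a4) t
        (lohe_rhs A kappa (fun k => T k t) j a1 a2 a3 a4).

Definition free_flow d1 d2 d3 d4
  (B : 'I_d1 -> 'I_d2 -> 'I_d1 -> 'I_d2 -> C)
  (Cj : 'I_d3 -> 'I_d4 -> 'I_d3 -> 'I_d4 -> C) : tensor8 d1 d2 d3 d4 :=
  fun a1 b1 g1 e1 a2 b2 g2 e2 =>
    B a1 b1 a2 b2 * (g1 == g2)%:R * (e1 == e2)%:R
    + Cj g1 e1 g2 e2 * (a1 == a2)%:R * (b1 == b2)%:R.

Definition dmm_kappa (k1 k2 : R) (i1 i2 i3 i4 : bool) : R :=
  match i1, i2, i3, i4 with
  | false, true, true, true => k1
  | true, true, false, true => k1
  | true, false, true, true => k2
  | true, true, true, false => k2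
  | _, _, _, _ => 0
  end.

End Defs.

(* Main.v *)
Require Import Defs.
From mathcomp Require Import all_boot all_order all_algebra.
From mathcomp Require Import reals topology normedtype derive.
From mathcomp Require Import complex.
From mathcomp Require Import boolp classical_sets set_interval realfun sequences exp.
From mathcomp Require Import ring lra.
Import Order.TTheory GRing.Theory Num.Theory.
Import numFieldNormedType.Exports.
Set Implicit Arguments. Unset Strict Implicit. Unset Printing Implicit Defensive.
Local Open Scope ring_scope.
Local Open Scope classical_set_scope.

Section CN.
Variable R : realType.
Local Notation C := R[i].

Definition cn (z : C) : R := `|complex.Re z| + `|complex.Im z|.

Lemma cn_ge0 z : 0 <= cn z.
Proof. by rewrite /cn addr_ge0. Qed.

Lemma cn0 : cn 0 = 0.
Proof. by rewrite /cn /= normr0 addr0. Qed.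

Lemma cnD a b : cn (a + b) <= cn a + cn b.
Proof.
case: a => a1 a2; case: b => b1 b2; rewrite /cn /=.
have h1 := ler_normD a1 b1; have h2 := ler_normD a2 b2. lra.
Qed.

Lemma cnN a : cn (- a) = cn a.
Proof. by case: a => a1 a2; rewrite /cn /= !normrN. Qed.

Lemma cnB a b : cn (a - b) = cn (b - a).
Proof. by rewrite -cnN opprB. Qed.

Lemma cnM a b : cn (a * b) <= cn a * cn b.
Proof.
case: a => a1 a2; case: b => b1 b2; rewrite /cn /=.
have h1 := ler_normB (a1 * b1) (a2 * b2).
have h2 := ler_normD (a1 * b2) (a2 * b1).
rewrite !normrM in h1 h2.
have := normr_ge0 a1; have := normr_ge0 a2; have := normr_ge0 b1; have := normr_ge0 b2.
nra.
Qed.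

Lemma cn_conj a : cn (Num.conj a) = cn a.
Proof. by case: a => a1 a2; rewrite /cn /= normrN. Qed.

Lemma cn_sum (I : Type) (r : seq I) (P : pred I) (F : I -> C) :
  cn (\sum_(i <- r | P i) F i) <= \sum_(i <- r | P i) cn (F i).
Proof.
elim: r => [|a r IH]; first by rewrite !big_nil cn0.
rewrite !big_cons; case: (P a) => //.
by apply: le_trans (cnD _ _) _; rewrite lerD2l.
Qed.

Lemma le_sum_term (I : finType) (c : I -> R) i :
  (forall j, 0 <= c j) -> c i <= \sum_j c j.
Proof.
move=> c0; rewrite (bigD1 i) //= lerDl; exact: sumr_ge0.
Qed.

Lemma sum_sq_le (I : finType) (c : I -> R) :
  (\sum_i c i) ^+ 2 <= #|I|%:R * \sum_i c i ^+ 2.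
Proof.
have e : forall i j, 2 * (c i * c j) <= c i ^+ 2 + c j ^+ 2.
  move=> i j; have := sqr_ge0 (c i - c j); nra.
have h : 2 * (\sum_i c i)^+2 <= \sum_i \sum_(j : I) (c i ^+2 + c j^+2).
  rewrite expr2 big_distrl /= mulr_sumr; apply: ler_sum => i _.
  rewrite big_distrr /= mulr_sumr; apply: ler_sum => j _; exact: e.
have e2 : \sum_i \sum_(j : I) (c i ^+2 + c j^+2) = 2 * (#|I|%:R * \sum_i c i ^+ 2).
  rewrite (eq_bigr (fun i => #|I|%:R * c i ^+ 2 + \sum_j c j ^+ 2)); last first.
    by move=> i _; rewrite big_split /= sumr_const mulr_natl.
  by rewrite big_split /= -mulr_sumr sumr_const -mulr_natl; ring.
rewrite e2 in h; by rewrite -(@ler_pM2l _ 2).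
Qed.

Section LipS.
Variable I : finType.

Definition Lip (f : (I -> C) -> C) :=
  forall M, 0 <= M -> exists2 L, 0 <= L &
    forall x y, (forall i, cn (x i) <= M) -> (forall i, cn (y i) <= M) ->
      cn (f x - f y) <= L * \sum_i cn (x i - y i).

Lemma Lip_ext f g : (forall z, f z = g z) -> Lip f -> Lip g.
Proof.
move=> e Lf M M0; have [L L0 H] := Lf M M0; exists L => // x y hx hy.
by rewrite -!e; apply: H.
Qed.

Lemma Lip_cst c : Lip (fun _ => c).
Proof.
move=> M M0; exists 0 => // x y _ _; rewrite subrr cn0 mul0r //.
Qed.

Lemma Lip_coord i : Lip (fun z => z i).
Proof.
move=> M M0; exists 1 => // x y _ _; rewrite mul1r.
exact: (@le_sum_term _ (fun j => cn (x j - y j)) i (fun j => cn_ge0 _)).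
Qed.

Lemma Lip_bound f M : Lip f -> 0 <= M -> exists2 B, 0 <= B &
  forall x, (forall i, cn (x i) <= M) -> cn (f x) <= B.
Proof.
move=> Lf M0; have [L L0 H] := Lf M M0.
exists (L * (#|I|%:R * M) + cn (f (fun _ => 0))).
  by rewrite addr_ge0 ?cn_ge0 // mulr_ge0 // mulr_ge0.
move=> x hx.
have := H x (fun _ => 0) hx (fun _ => ltac:(by rewrite cn0)).
have hs : \sum_i cn (x i - 0) <= #|I|%:R * M.
  rewrite -sum1_card natr_sum mulr_suml; apply: ler_sum => i _.
  by rewrite subr0 mul1r.
move=> h.
have h2 : cn (f x) <= cn (f x - f (fun _ => 0)) + cn (f (fun _ => 0)).
  by have := cnD (f x - f (fun _ => 0)) (f (fun _ => 0)); rewrite subrK.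
apply: (le_trans h2); rewrite lerD2r; apply: (le_trans h).
by rewrite ler_wpM2l.
Qed.

Lemma LipD f g : Lip f -> Lip g -> Lip (fun z => f z + g z).
Proof.
move=> Lf Lg M M0; have [L1 L10 H1] := Lf M M0; have [L2 L20 H2] := Lg M M0.
exists (L1 + L2); first exact: addr_ge0.
move=> x y hx hy.
have -> : f x + g x - (f y + g y) = (f x - f y) + (g x - g y) by ring.
apply: le_trans (cnD _ _) _; rewrite mulrDl.
by apply: lerD; [apply: H1|apply: H2].
Qed.

Lemma LipN f : Lip f -> Lip (fun z => - f z).
Proof.
move=> Lf M M0; have [L L0 H] := Lf M M0; exists L => // x y hx hy.
by rewrite -opprD cnN; apply: H.
Qed.

Lemma LipM f g : Lip f -> Lip g -> Lip (fun z => f z * g z).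
Proof.
move=> Lf Lg M M0; have [L1 L10 H1] := Lf M M0; have [L2 L20 H2] := Lg M M0.
have [Bf Bf0 HBf] := @Lip_bound f M Lf M0; have [Bg Bg0 HBg] := @Lip_bound g M Lg M0.
exists (Bf * L2 + L1 * Bg); first by rewrite addr_ge0 // mulr_ge0.
move=> x y hx hy.
have -> : f x * g x - f y * g y = f x * (g x - g y) + (f x - f y) * g y by ring.
apply: le_trans (cnD _ _) _.
set S := \sum_i _.
have S0 : 0 <= S by apply: sumr_ge0 => i _; exact: cn_ge0.
have e1 : cn (f x * (g x - g y)) <= Bf * (L2 * S).
  apply: le_trans (cnM _ _) _; apply: ler_pM; rewrite ?cn_ge0 //.
    exact: HBf.
  exact: H2.
have e2 : cn ((f x - f y) * g y) <= (L1 * S) * Bg.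
  apply: le_trans (cnM _ _) _; apply: ler_pM; rewrite ?cn_ge0 //.
    exact: H1.
  exact: HBg.
have -> : (Bf * L2 + L1 * Bg) * S = Bf * (L2 * S) + (L1 * S) * Bg by ring.
exact: lerD.
Qed.

Lemma Lip_conj f : Lip f -> Lip (fun z => Num.conj (f z)).
Proof.
move=> Lf M M0; have [L L0 H] := Lf M M0; exists L => // x y hx hy.
by rewrite -rmorphB cn_conj; apply: H.
Qed.

Lemma Lip_sum (J : Type) (r : seq J) (P : pred J) (F : (I -> C) -> J -> C) :
  (forall j, Lip (fun z => F z j)) ->
  Lip (fun z => \big[+%R/0]_(j <- r | P j) F z j).
Proof.
move=> HF; elim: r => [|a r IH].
  by apply: (@Lip_ext (fun _ => 0)) => [z|]; [rewrite big_nil|exact: Lip_cst].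
case Pa: (P a).
  apply: (@Lip_ext (fun z => F z a + \big[+%R/0]_(j <- r | P j) F z j)).
    by move=> z; rewrite big_cons Pa.
  exact: LipD.
by apply: (@Lip_ext (fun z => \big[+%R/0]_(j <- r | P j) F z j)) => // z; rewrite big_cons Pa.
Qed.

End LipS.
End CN.

Section PCS.
Variable R : realType.
Local Notation C := R[i].

Definition PC (f : R -> R) :=
  f x @[x --> 0^'+] --> f 0 /\ forall s : R, 0 < s -> f x @[x --> s] --> f s.

Lemma is_derive_cont (f : R -> R) (s d : R) : is_derive s (1 : R) f d -> f x @[x --> s] --> f s.
Proof.
move=> [df _]; exact/differentiable_continuous/derivable1_diffP.
Qed.

Lemma PCD f g : PC f -> PC g -> PC (fun s => f s + g s).
Proof.
move=> [f0 fs] [g0 gs]; split; first exact: (cvgD f0 g0).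
move=> s s0; exact: (cvgD (fs s s0) (gs s s0)).
Qed.

Lemma PCM f g : PC f -> PC g -> PC (fun s => f s * g s).
Proof.
move=> [f0 fs] [g0 gs]; split; first exact: (cvgM f0 g0).
move=> s s0; exact: (cvgM (fs s s0) (gs s s0)).
Qed.

Lemma PCN f : PC f -> PC (fun s => - f s).
Proof.
move=> [f0 fs]; split; first exact: (cvgN f0).
move=> s s0; exact: (cvgN (fs s s0)).
Qed.

Lemma PC_norm f : PC f -> PC (fun s => `|f s|).
Proof.
move=> [f0 fs]; split; first exact: (cvg_norm f0).
move=> s s0; exact: (cvg_norm (fs s s0)).
Qed.

Lemma PC_cst c : PC (fun _ => c).
Proof. split; [exact: cvg_cst| move=> s _; exact: cvg_cst]. Qed.

Lemma PC_cont f : continuous f -> PC f.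
Proof.
move=> cf; split; last by move=> s _; exact: cf.
exact/cvg_at_right_filter/cf.
Qed.

Lemma PC_ext f g : (forall s, f s = g s) -> PC f -> PC g.
Proof. by move=> e; have -> : g = f by apply/funext => s; rewrite e. Qed.

Lemma PC_sum (J : Type) (r : seq J) (P : pred J) (F : J -> R -> R) :
  (forall j, PC (F j)) -> PC (fun s => \big[+%R/0]_(j <- r | P j) F j s).
Proof.
move=> HF; elim: r => [|a r IH].
  by apply: (@PC_ext (fun _ => 0)) => [z|]; [rewrite big_nil|exact: PC_cst].
case Pa: (P a).
  apply: (@PC_ext (fun z => F a z + \big[+%R/0]_(j <- r | P j) F j z)).
    by move=> z; rewrite big_cons Pa.
  exact: PCD.
by apply: (@PC_ext (fun z => \big[+%R/0]_(j <- r | P j) F j z)) => // z; rewrite big_cons Pa.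
Qed.

Lemma PC_within f (t0 : R) : 0 < t0 -> PC f -> {within `[0, t0], continuous f}.
Proof.
move=> t0p [f0 fs]; apply/continuous_within_itvP => //; split => //.
  move=> s; rewrite in_itv /= => /andP [s0 _]; exact: fs.
exact/cvg_at_left_filter/fs.
Qed.

Lemma PC_Re (f : R -> C) (f' : R -> C) : ccont0 f ->
  (forall s, 0 < s -> cderiv f s (f' s)) -> PC (fun s => complex.Re (f s)).
Proof.
move=> [h0 _] hd; split => // s s0; have [h _] := hd s s0; exact: is_derive_cont h.
Qed.

Lemma PC_Im (f : R -> C) (f' : R -> C) : ccont0 f ->
  (forall s, 0 < s -> cderiv f s (f' s)) -> PC (fun s => complex.Im (f s)).
Proof.
move=> [_ h0] hd; split => // s s0; have [_ h] := hd s s0; exact: is_derive_cont h.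
Qed.

End PCS.

Section Uniq.
Variable R : realType.
Local Notation C := R[i].

Lemma ReB (u v : C) : complex.Re (u - v) = complex.Re u - complex.Re v.
Proof. by case: u; case: v. Qed.
Lemma ImB (u v : C) : complex.Im (u - v) = complex.Im u - complex.Im v.
Proof. by case: u; case: v. Qed.

Lemma is_derive_ext (f g : R -> R) (s d : R) :
  (forall u, f u = g u) -> is_derive s (1 : R) f d -> is_derive s (1 : R) g d.
Proof. by move=> e; have -> : g = f by apply/funext => u; rewrite e. Qed.

Lemma is_derive_bsum (J : Type) (r : seq J) (h : J -> R -> R) (dh : J -> R) (s : R) :
  (forall j, is_derive s (1 : R) (h j) (dh j)) ->
  is_derive s (1 : R) (fun u => \sum_(j <- r) h j u) (\sum_(j <- r) dh j).
Proof.
move=> H; elim: r => [|a r IH].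
  rewrite big_nil; apply: (@is_derive_ext (fun _ => 0));
    by [move=> u; rewrite big_nil | exact: is_derive_cst].
rewrite big_cons.
have := is_deriveD (H a) IH => hd.
apply: (@is_derive_ext _ _ s _ _ hd) => u; by rewrite big_cons.
Qed.

Lemma is_derive_sqB (f g : R -> R) (a b s : R) :
  is_derive s (1 : R) f a -> is_derive s (1 : R) g b ->
  is_derive s (1 : R) (fun u => (f u - g u) ^+ 2) (2 * (f s - g s) * (a - b)).
Proof.
move=> hf hg.
have h := is_deriveM (is_deriveB hf hg) (is_deriveB hf hg).
have h2 := is_derive_eq h (_ : _ = 2 * (f s - g s) * (a - b)).
apply: (@is_derive_ext _ _ s _ _ (h2 _)) => [u|]; first by rewrite expr2.
rewrite /GRing.scale /=; change ((f s - g s) * (a - b) + (f s - g s) * (a - b) = 2 * (f s - g s) * (a - b)); ring.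
Qed.

Variable I : finType.

Lemma LipV (F : (I -> C) -> I -> C) : (forall i, Lip (fun z => F z i)) ->
  forall M, 0 <= M -> exists2 L, 0 <= L &
    forall x y, (forall i, cn (x i) <= M) -> (forall i, cn (y i) <= M) ->
      forall i, cn (F x i - F y i) <= L * \sum_i cn (x i - y i).
Proof.
move=> HL M M0.
have H : forall i, exists L, 0 <= L /\ forall x y, (forall i, cn (x i) <= M) ->
   (forall i, cn (y i) <= M) -> cn (F x i - F y i) <= L * \sum_i cn (x i - y i).
  by move=> i; have [L L0 HH] := HL i M M0; exists L.
have [Lf HLf] := choice H.
exists (\sum_i Lf i); first by apply: sumr_ge0 => i _; case: (HLf i).
move=> x y hx hy i; case: (HLf i) => L0 HH.
apply: le_trans (HH x y hx hy) _; apply: ler_wpM2r.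
  by apply: sumr_ge0 => j _; exact: cn_ge0.
exact: (@le_sum_term _ _ Lf i (fun j => (HLf j).1)).
Qed.

End Uniq.

Section Uniq2.
Variable R : realType.
Local Notation C := R[i].
Variable I : finType.

Lemma cn_ReIm (u : C) : cn u = `|complex.Re u| + `|complex.Im u|.
Proof. by []. Qed.

Lemma key_ineq (a b p q L S : R) : 0 <= L -> 0 <= S ->
  `|p| + `|q| <= L * S ->
  2 * a * p + 2 * b * q <= 2 * ((`|a| + `|b|) * (L * S)).
Proof.
move=> L0 S0 h.
have h1 : a * p <= `|a| * `|p| by rewrite -normrM ler_norm.
have h2 : b * q <= `|b| * `|q| by rewrite -normrM ler_norm.
have := normr_ge0 a; have := normr_ge0 b; have := normr_ge0 p; have := normr_ge0 q.
nra.
Qed.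

Lemma sq_le (a b : R) : (`|a| + `|b|) ^+ 2 <= 2 * (a ^+ 2 + b ^+ 2).
Proof.
rewrite -(real_normK (num_real a)) -(real_normK (num_real b)).
have := sqr_ge0 (`|a| - `|b|); nra.
Qed.

Lemma ode_unique (F : (I -> C) -> I -> C) (x y : R -> I -> C) (t0 : R) :
  (forall i, Lip (fun z => F z i)) -> 0 < t0 ->
  (forall i, ccont0 (fun s => x s i)) -> (forall i, ccont0 (fun s => y s i)) ->
  (forall i s, 0 < s -> cderiv (fun s => x s i) s (F (x s) i)) ->
  (forall i s, 0 < s -> cderiv (fun s => y s i) s (F (y s) i)) ->
  x 0 = y 0 -> x t0 = y t0.
Proof.
move=> HL t0p cx cy dx dy e0.
have pRx i := @PC_Re R _ (fun s => F (x s) i) (cx i) (dx i).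
have pIx i := @PC_Im R _ (fun s => F (x s) i) (cx i) (dx i).
have pRy i := @PC_Re R _ (fun s => F (y s) i) (cy i) (dy i).
have pIy i := @PC_Im R _ (fun s => F (y s) i) (cy i) (dy i).
pose g s := \sum_i (cn (x s i) + cn (y s i)).
have pg : PC g.
  apply: PC_sum => i; rewrite /cn; apply: PCD; apply: PCD; exact: PC_norm.
have [c c01 gmax] := EVT_max (ltW t0p) (PC_within t0p pg).
pose M := g c.
have M0 : 0 <= M by apply: sumr_ge0 => i _; rewrite addr_ge0 ?cn_ge0.
have bxy : forall s, 0 <= s <= t0 -> forall i, cn (x s i) <= M /\ cn (y s i) <= M.
  move=> s s0 i.
  have hs : g s <= M by apply: gmax; rewrite in_itv /=.
  have hi := @le_sum_term _ _ (fun i => cn (x s i) + cn (y s i)) i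
               (fun j => addr_ge0 (cn_ge0 _) (cn_ge0 _)).
  have := cn_ge0 (x s i); have := cn_ge0 (y s i).
  rewrite /g in hs; split; lra.
have [L L0 HL'] := LipV HL M0.
pose K := 4 * L * #|I|%:R.
pose D s := \sum_i ((complex.Re (x s i) - complex.Re (y s i)) ^+ 2
                  + (complex.Im (x s i) - complex.Im (y s i)) ^+ 2).
pose D' s := \sum_i (2 * (complex.Re (x s i) - complex.Re (y s i))
                       * (complex.Re (F (x s) i) - complex.Re (F (y s) i))
                   + 2 * (complex.Im (x s i) - complex.Im (y s i))
                       * (complex.Im (F (x s) i) - complex.Im (F (y s) i))).
pose ex (s : R) := expR (- (K * s)).
pose E s := D s * ex s.
have dD : forall s : R, 0 < s -> is_derive s (1 : R) D (D' s).
  move=> s s0; rewrite /D /D'.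
  apply: is_derive_bsum => i.
  have [hxr hxi] := dx i s s0; have [hyr hyi] := dy i s s0.
  exact: is_deriveD (is_derive_sqB hxr hyr) (is_derive_sqB hxi hyi).
have dex : forall s : R, is_derive s (1 : R) ex (ex s * - K).
  move=> s.
  have hg : is_derive s (1 : R) (fun u : R => - (K * u)) (- K).
    have h := is_deriveN (is_deriveZ K (@is_derive_id _ _ s (1 : R))).
    apply: (is_derive_eq h); by rewrite /GRing.scale /= mulr1.
  exact: (is_derive1_comp (is_derive_expR _) hg).
have dE : forall s : R, 0 < s -> is_derive s (1 : R) E (ex s * (D' s - K * D s)).
  move=> s s0; have h := is_deriveM (dD s s0) (dex s).
  apply: (is_derive_eq h); rewrite /GRing.scale /=; ring.
have D'le : forall s : R, 0 < s -> s <= t0 -> D' s <= K * D s.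
  move=> s s0 st.
  have sb : 0 <= s <= t0 by rewrite ltW.
  pose cc i := cn (x s i - y s i).
  pose S := \sum_i cc i.
  have S0 : 0 <= S by apply: sumr_ge0 => i _; exact: cn_ge0.
  have h1 : D' s <= \sum_i 2 * (cc i * (L * S)).
    apply: ler_sum => i _.
    have := HL' (x s) (y s) (fun i => (bxy s sb i).1) (fun i => (bxy s sb i).2) i.
    move=> h; rewrite /cc /cn !ReB !ImB; apply: key_ineq => //; rewrite -ReB -ImB; exact: h.
  have h2 : \sum_i 2 * (cc i * (L * S)) = 2 * L * S ^+ 2.
    rewrite (eq_bigr (fun i => (2 * L * S) * cc i)); last by move=> i _; ring.
    by rewrite -mulr_sumr expr2 mulrA.
  have h3 := sum_sq_le cc.
  have h4 : \sum_i cc i ^+ 2 <= 2 * D s.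
    rewrite /D mulr_sumr; apply: ler_sum => i _.
    by rewrite /cc /cn ReB ImB; exact: sq_le.
  have hI : 0 <= (#|I|%:R : R) by [].
  rewrite h2 in h1; rewrite /K.
  apply: (le_trans h1).
  have : 2 * L * S ^+ 2 <= 2 * L * (#|I|%:R * \sum_i cc i ^+ 2).
    by apply: ler_wpM2l => //; rewrite mulr_ge0.
  have : 2 * L * (#|I|%:R * \sum_i cc i ^+ 2) <= 2 * L * (#|I|%:R * (2 * D s)).
    by apply: ler_wpM2l; rewrite ?mulr_ge0 // ler_wpM2l.
  nra.
have Ew : {within `[0, t0], continuous E}.
  apply: PC_within => //; apply: PCM.
    apply: PC_sum => i; apply: PCD.
      apply: (@PC_ext _ (fun s => (complex.Re (x s i) - complex.Re (y s i)) *
                                (complex.Re (x s i) - complex.Re (y s i)))).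
        by move=> s; rewrite expr2.
      by apply: PCM; apply: PCD => //; apply: PCN.
    apply: (@PC_ext _ (fun s => (complex.Im (x s i) - complex.Im (y s i)) *
                              (complex.Im (x s i) - complex.Im (y s i)))).
      by move=> s; rewrite expr2.
    by apply: PCM; apply: PCD => //; apply: PCN.
  split; last by move=> s _; exact: is_derive_cont (dex s).
  exact/cvg_at_right_filter/(is_derive_cont (dex 0)).
have Ele : E t0 <= E 0.
  apply: (ler0_derive1_nincr _ _ Ew); rewrite ?lexx ?(ltW t0p) //.
  - move=> s; rewrite in_itv /= => /andP [s0 _]; by case: (dE s s0).
  - move=> s; rewrite in_itv /= => /andP [s0 st].
    rewrite derive1E (@derive_val _ _ _ _ _ _ _ (dE s s0)).
    rewrite mulr_ge0_le0 ?expR_ge0 // subr_le0; exact: D'le s s0 (ltW st).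
have E0 : E 0 = 0.
  by rewrite /E /D e0 big1 ?mul0r // => i _; rewrite !subrr expr2 !mul0r addr0.
have D0 : D t0 = 0.
  have Dge : 0 <= D t0 by apply: sumr_ge0 => i _; rewrite addr_ge0 ?sqr_ge0.
  have h : E t0 <= 0 by move: Ele; rewrite E0.
  have ep := expR_gt0 (- (K * t0)); rewrite /E /ex in h; nra.
apply/funext => i.
have hle := @le_sum_term _ _ (fun j => (complex.Re (x t0 j) - complex.Re (y t0 j)) ^+ 2 +
   (complex.Im (x t0 j) - complex.Im (y t0 j)) ^+ 2) i (fun j => addr_ge0 (sqr_ge0 _) (sqr_ge0 _)).
have : (complex.Re (x t0 i) - complex.Re (y t0 i)) ^+ 2 +
   (complex.Im (x t0 i) - complex.Im (y t0 i)) ^+ 2 == 0.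
  by rewrite eq_le addr_ge0 ?sqr_ge0 // andbT; move: hle; rewrite -/(D t0) D0.
 rewrite paddr_eq0 ?sqr_ge0 // !sqrf_eq0 !subr_eq0 => /andP [/eqP h1 /eqP h2].
move: h1 h2; case: (x t0 i) => a1 a2; case: (y t0 i) => b1 b2 /= -> -> //.
Qed.

End Uniq2.

Section LipLohe.
Variable R : realType.
Local Notation C := R[i].
Variables N d1 d2 d3 d4 : nat.
Local Notation I := ('I_N * 'I_d1 * 'I_d2 * 'I_d3 * 'I_d4)%type.

Definition tens (z : I -> C) : 'I_N -> tensor4 R d1 d2 d3 d4 :=
  fun k b1 b2 b3 b4 => z (k, b1, b2, b3, b4).

Ltac lip1 := match goal with
 | |- Lip (fun _ => ?c) => exact: (@Lip_cst _ _ c)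
 | |- Lip (fun z => @?a z + @?b z) => apply: (@LipD _ _ a b)
 | |- Lip (fun z => - @?a z) => apply: (@LipN _ _ a)
 | |- Lip (fun z => @?a z * @?b z) => apply: (@LipM _ _ a b)
 | |- Lip (fun z => Num.conj (@?a z)) => apply: (@Lip_conj _ _ a)
 | |- Lip (fun z => \big[+%R/0]_(j <- ?r | @?P j) @?F z j) => apply: (@Lip_sum _ _ _ r P F) => ?
 | |- Lip (fun z => z ?i) => exact: (@Lip_coord _ _ i)
end.

Lemma Lip_lohe (A : 'I_N -> tensor8 R d1 d2 d3 d4) kappa j a1 a2 a3 a4 :
  Lip (fun z : I -> C => lohe_rhs A kappa (tens z) j a1 a2 a3 a4).
Proof.
rewrite /lohe_rhs /tens; cbv zeta.
repeat lip1.
Qed.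

End LipLohe.

Section Alg.
Variable R : realType.
Local Notation C := R[i].

Section S4.
Variables T1 T2 T3 T4 : finType.

Lemma S4_exch (K : finType) (f : K -> T1 -> T2 -> T3 -> T4 -> C) :
  \sum_(b1 : T1) \sum_(b2 : T2) \sum_(b3 : T3) \sum_(b4 : T4) \sum_(k : K) f k b1 b2 b3 b4
  = \sum_(k : K) \sum_(b1 : T1) \sum_(b2 : T2) \sum_(b3 : T3) \sum_(b4 : T4) f k b1 b2 b3 b4.
Proof.
transitivity (\sum_(b1 : T1) \sum_(b2 : T2) \sum_(b3 : T3) \sum_(k : K) \sum_(b4 : T4) f k b1 b2 b3 b4).
  apply: eq_bigr => b1 _; apply: eq_bigr => b2 _; apply: eq_bigr => b3 _; exact: exchange_big.
transitivity (\sum_(b1 : T1) \sum_(b2 : T2) \sum_(k : K) \sum_(b3 : T3) \sum_(b4 : T4) f k b1 b2 b3 b4).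
  apply: eq_bigr => b1 _; apply: eq_bigr => b2 _; exact: exchange_big.
transitivity (\sum_(b1 : T1) \sum_(k : K) \sum_(b2 : T2) \sum_(b3 : T3) \sum_(b4 : T4) f k b1 b2 b3 b4).
  apply: eq_bigr => b1 _; exact: exchange_big.
exact: exchange_big.
Qed.

Lemma S4_prod (F : T3 -> T4 -> C) (P : T1 -> T2 -> C) :
  (\sum_(b3 : T3) \sum_(b4 : T4) F b3 b4) * (\sum_(b1 : T1) \sum_(b2 : T2) P b1 b2)
  = \sum_(b1 : T1) \sum_(b2 : T2) \sum_(b3 : T3) \sum_(b4 : T4) F b3 b4 * P b1 b2.
Proof.
rewrite big_distrr /=; apply: eq_bigr => b1 _; rewrite big_distrr /=; apply: eq_bigr => b2 _.
rewrite mulrC big_distrr /=; apply: eq_bigr => b3 _; rewrite big_distrr /=; apply: eq_bigr => b4 _.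
by rewrite mulrC.
Qed.

Lemma S4_prod' (P : T1 -> T2 -> C) (F : T3 -> T4 -> C) :
  (\sum_(b1 : T1) \sum_(b2 : T2) P b1 b2) * (\sum_(b3 : T3) \sum_(b4 : T4) F b3 b4)
  = \sum_(b1 : T1) \sum_(b2 : T2) \sum_(b3 : T3) \sum_(b4 : T4) P b1 b2 * F b3 b4.
Proof.
rewrite mulrC S4_prod; apply: eq_bigr => b1 _; apply: eq_bigr => b2 _.
apply: eq_bigr => b3 _; apply: eq_bigr => b4 _; exact: mulrC.
Qed.

Lemma S4_B (f g : T1 -> T2 -> T3 -> T4 -> C) :
  \sum_(b1 : T1) \sum_(b2 : T2) \sum_(b3 : T3) \sum_(b4 : T4) f b1 b2 b3 b4
  - \sum_(b1 : T1) \sum_(b2 : T2) \sum_(b3 : T3) \sum_(b4 : T4) g b1 b2 b3 b4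
  = \sum_(b1 : T1) \sum_(b2 : T2) \sum_(b3 : T3) \sum_(b4 : T4) (f b1 b2 b3 b4 - g b1 b2 b3 b4).
Proof.
rewrite -sumrB; apply: eq_bigr => b1 _; rewrite -sumrB; apply: eq_bigr => b2 _.
rewrite -sumrB; apply: eq_bigr => b3 _; by rewrite sumrB.
Qed.

Lemma S4_M (c d : C) (f : T1 -> T2 -> T3 -> T4 -> C) :
  c * (\sum_(b1 : T1) \sum_(b2 : T2) \sum_(b3 : T3) \sum_(b4 : T4) f b1 b2 b3 b4) * d
  = \sum_(b1 : T1) \sum_(b2 : T2) \sum_(b3 : T3) \sum_(b4 : T4) (c * f b1 b2 b3 b4 * d).
Proof.
rewrite big_distrr big_distrl /=; apply: eq_bigr => b1 _.
rewrite big_distrr big_distrl /=; apply: eq_bigr => b2 _.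
rewrite big_distrr big_distrl /=; apply: eq_bigr => b3 _.
by rewrite big_distrr big_distrl /=.
Qed.

Lemma S4_D (f g : T1 -> T2 -> T3 -> T4 -> C) :
  \sum_(b1 : T1) \sum_(b2 : T2) \sum_(b3 : T3) \sum_(b4 : T4) (f b1 b2 b3 b4 + g b1 b2 b3 b4)
  = \sum_(b1 : T1) \sum_(b2 : T2) \sum_(b3 : T3) \sum_(b4 : T4) f b1 b2 b3 b4
  + \sum_(b1 : T1) \sum_(b2 : T2) \sum_(b3 : T3) \sum_(b4 : T4) g b1 b2 b3 b4.
Proof.
rewrite -big_split; apply: eq_bigr => b1 _; rewrite -big_split; apply: eq_bigr => b2 _.
rewrite -big_split; apply: eq_bigr => b3 _; by rewrite big_split.
Qed.

Lemma S4_Ml (c : C) (f : T1 -> T2 -> T3 -> T4 -> C) :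
  c * (\sum_(b1 : T1) \sum_(b2 : T2) \sum_(b3 : T3) \sum_(b4 : T4) f b1 b2 b3 b4)
  = \sum_(b1 : T1) \sum_(b2 : T2) \sum_(b3 : T3) \sum_(b4 : T4) (c * f b1 b2 b3 b4).
Proof.
rewrite big_distrr /=; apply: eq_bigr => b1 _.
rewrite big_distrr /=; apply: eq_bigr => b2 _.
rewrite big_distrr /=; apply: eq_bigr => b3 _.
by rewrite big_distrr.
Qed.

Lemma sum_delta2 (g : T1 -> T2 -> C) a1 a2 :
  \sum_(b1 : T1) \sum_(b2 : T2) (g b1 b2 * (a1 == b1)%:R * (a2 == b2)%:R) = g a1 a2.
Proof.
rewrite (bigD1 a1) //= [X in _ + X]big1 ?addr0; last first.
  move=> b1 /negbTE hb; apply: big1 => b2 _; by rewrite eq_sym hb mulr0 mul0r.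
rewrite (bigD1 a2) //= [X in _ + X]big1 ?addr0; last first.
  by move=> b2 /negbTE hb; rewrite eq_sym hb mulr0.
by rewrite !eqxx !mulr1.
Qed.

End S4.

Lemma mulmx3E m n p q (A : 'M[C]_(m, n)) (B : 'M[C]_(p, n)) (Cm : 'M[C]_(p, q)) a c :
  (A *m adjmx B *m Cm) a c = \sum_(b1 < p) \sum_(b2 < n) A a b2 * Num.conj (B b1 b2) * Cm b1 c.
Proof.
rewrite mxE; apply: eq_bigr => b1 _; rewrite mxE big_distrl /=; apply: eq_bigr => b2 _.
by rewrite /adjmx mxE.
Qed.

Lemma frobE m n (X Y : 'M[C]_(m, n)) :
  frob X Y = \sum_(b3 < m) \sum_(b4 < n) Num.conj (X b3 b4) * Y b3 b4.
Proof.
rewrite /frob /mxtrace exchange_big; apply: eq_bigr => b4 _; rewrite mxE.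
by apply: eq_bigr => b3 _; rewrite /adjmx mxE.
Qed.

Lemma conj_natV (n : nat) : Num.conj ((n%:R : C)^-1) = n%:R^-1.
Proof. by rewrite fmorphV rmorph_nat. Qed.

Lemma entry_sub_scale m n (M M' : 'M[C]_(m, n)) (c c' : C) a b :
  (c *: M - c' *: M') a b = c * M a b - c' * M' a b.
Proof. by rewrite !mxE. Qed.

Lemma pt_lemma (K : finType) (c : C) (X W : K -> C) (Y1 Y Z Y' : C) :
  (c * \sum_(k : K) X k) * Y1 * Y - Z * Num.conj (c * \sum_(k : K) W k) * Y'
  = \sum_(k : K) (c * X k * Y1 * Y - Z * (Num.conj c * Num.conj (W k)) * Y').
Proof.
rewrite sumrB -mulrA; congr (_ - _).
  by rewrite big_distrr /= big_distrl /=; apply: eq_bigr => k _; ring.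
rewrite rmorphM rmorph_sum big_distrr /= big_distrr /= big_distrl /=.
by apply: eq_bigr => k _; ring.
Qed.

Definition Gterm N d1 d2 d3 d4 (T : 'I_N -> tensor4 R d1 d2 d3 d4) (j : 'I_N)
  (a1 : 'I_d1) (a2 : 'I_d2) (a3 : 'I_d3) (a4 : 'I_d4) (i1 i2 i3 i4 : bool) : C :=
  let Tc : tensor4 R d1 d2 d3 d4 :=
    fun b1 b2 b3 b4 => N%:R^-1 * \sum_(k < N) T k b1 b2 b3 b4 in
  \sum_(b1 < d1) \sum_(b2 < d2) \sum_(b3 < d3) \sum_(b4 < d4)
       (Tc (sel i1 a1 b1) (sel i2 a2 b2) (sel i3 a3 b3) (sel i4 a4 b4)
          * Num.conj (T j b1 b2 b3 b4)
          * T j (sel (~~ i1) a1 b1) (sel (~~ i2) a2 b2)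
                (sel (~~ i3) a3 b3) (sel (~~ i4) a4 b4)
        - T j (sel i1 a1 b1) (sel i2 a2 b2) (sel i3 a3 b3) (sel i4 a4 b4)
          * Num.conj (Tc b1 b2 b3 b4)
          * T j (sel (~~ i1) a1 b1) (sel (~~ i2) a2 b2)
                (sel (~~ i3) a3 b3) (sel (~~ i4) a4 b4)).

Lemma lohe_rhsE N d1 d2 d3 d4 (A : 'I_N -> tensor8 R d1 d2 d3 d4) kappa
  (T : 'I_N -> tensor4 R d1 d2 d3 d4) j a1 a2 a3 a4 :
  lohe_rhs A kappa T j a1 a2 a3 a4 =
  \sum_(b1 < d1) \sum_(b2 < d2) \sum_(b3 < d3) \sum_(b4 < d4)
     A j a1 a2 a3 a4 b1 b2 b3 b4 * T j b1 b2 b3 b4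
  + \sum_(i1 : bool) \sum_(i2 : bool) \sum_(i3 : bool) \sum_(i4 : bool)
     ((kappa i1 i2 i3 i4)%:C)%C * Gterm T j a1 a2 a3 a4 i1 i2 i3 i4.
Proof. reflexivity. Qed.

Lemma sum_kappa (k1 k2 : R) (G : bool -> bool -> bool -> bool -> C) :
  \sum_(i1 : bool) \sum_(i2 : bool) \sum_(i3 : bool) \sum_(i4 : bool)
     ((dmm_kappa k1 k2 i1 i2 i3 i4)%:C)%C * G i1 i2 i3 i4
  = (k1%:C)%C * G false true true true + (k1%:C)%C * G true true false true
    + (k2%:C)%C * G true false true true + (k2%:C)%C * G true true true false.
Proof.
rewrite !big_bool /=.
have -> : ((0 : R)%:C)%C = 0 :> C by [].
ring.
Qed.

End Alg.

Section Terms.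
Variable R : realType.
Local Notation C := R[i].
Variables N d1 d2 d3 d4 : nat.
Variables (U : 'I_N -> 'M[C]_(d1, d2)) (V : 'I_N -> 'M[C]_(d3, d4)).
Local Notation T := (fun k => mxtensor (U k) (V k)).

Lemma term1 j a1 a2 a3 a4 :
  Gterm T j a1 a2 a3 a4 false true true true =
  N%:R^-1 * (\sum_(k < N) (frob (V j) (V k) *: (U k *m adjmx (U j) *m U j)
                          - frob (V k) (V j) *: (U j *m adjmx (U k) *m U j))) a1 a2
  * V j a3 a4.
Proof.
rewrite /Gterm /mxtensor /=.
under eq_bigr => b1 _ do under eq_bigr => b2 _ do under eq_bigr => b3 _ do
  under eq_bigr => b4 _ do rewrite pt_lemma.
rewrite S4_exch summxE.
under [in RHS]eq_bigr => k _ do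
  rewrite entry_sub_scale !mulmx3E !frobE !S4_prod S4_B.
rewrite big_distrr /= big_distrl /=.
apply: eq_bigr => k _; rewrite S4_M.
apply: eq_bigr => b1 _; apply: eq_bigr => b2 _; apply: eq_bigr => b3 _; apply: eq_bigr => b4 _.
rewrite conj_natV !rmorphM; ring.
Qed.

Lemma term2 j a1 a2 a3 a4 :
  Gterm T j a1 a2 a3 a4 true true false true =
  U j a1 a2 * (N%:R^-1 * (\sum_(k < N) (frob (U j) (U k) *: (V k *m adjmx (V j) *m V j)
                          - frob (U k) (U j) *: (V j *m adjmx (V k) *m V j))) a3 a4).
Proof.
rewrite /Gterm /mxtensor /=.
under eq_bigr => b1 _ do under eq_bigr => b2 _ do under eq_bigr => b3 _ do
  under eq_bigr => b4 _ do rewrite pt_lemma.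
rewrite S4_exch summxE.
under [in RHS]eq_bigr => k _ do
  rewrite entry_sub_scale !mulmx3E !frobE !S4_prod' S4_B.
rewrite mulrA big_distrr /=.
apply: eq_bigr => k _; rewrite S4_Ml.
apply: eq_bigr => b1 _; apply: eq_bigr => b2 _; apply: eq_bigr => b3 _; apply: eq_bigr => b4 _.
rewrite conj_natV !rmorphM; ring.
Qed.

Lemma term3 j a1 a2 a3 a4 :
  Gterm T j a1 a2 a3 a4 true false true true =
  N%:R^-1 * (\sum_(k < N) (frob (V j) (V k) *: (U j *m adjmx (U j) *m U k)
                          - frob (V k) (V j) *: (U j *m adjmx (U k) *m U j))) a1 a2
  * V j a3 a4.
Proof.
rewrite /Gterm /mxtensor /=.
under eq_bigr => b1 _ do under eq_bigr => b2 _ do under eq_bigr => b3 _ do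
  under eq_bigr => b4 _ do rewrite pt_lemma.
rewrite S4_exch summxE.
under [in RHS]eq_bigr => k _ do
  rewrite entry_sub_scale !mulmx3E !frobE !S4_prod S4_B.
rewrite big_distrr /= big_distrl /=.
apply: eq_bigr => k _; rewrite S4_M.
apply: eq_bigr => b1 _; apply: eq_bigr => b2 _; apply: eq_bigr => b3 _; apply: eq_bigr => b4 _.
rewrite conj_natV !rmorphM; ring.
Qed.

Lemma term4 j a1 a2 a3 a4 :
  Gterm T j a1 a2 a3 a4 true true true false =
  U j a1 a2 * (N%:R^-1 * (\sum_(k < N) (frob (U j) (U k) *: (V j *m adjmx (V j) *m V k)
                          - frob (U k) (U j) *: (V j *m adjmx (V k) *m V j))) a3 a4).
Proof.
rewrite /Gterm /mxtensor /=.
under eq_bigr => b1 _ do under eq_bigr => b2 _ do under eq_bigr => b3 _ do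
  under eq_bigr => b4 _ do rewrite pt_lemma.
rewrite S4_exch summxE.
under [in RHS]eq_bigr => k _ do
  rewrite entry_sub_scale !mulmx3E !frobE !S4_prod' S4_B.
rewrite mulrA big_distrr /=.
apply: eq_bigr => k _; rewrite S4_Ml.
apply: eq_bigr => b1 _; apply: eq_bigr => b2 _; apply: eq_bigr => b3 _; apply: eq_bigr => b4 _.
rewrite conj_natV !rmorphM; ring.
Qed.

Lemma termFF (Bj : 'I_d1 -> 'I_d2 -> 'I_d1 -> 'I_d2 -> C)
  (Cjj : 'I_d3 -> 'I_d4 -> 'I_d3 -> 'I_d4 -> C) j a1 a2 a3 a4 :
  \sum_(b1 < d1) \sum_(b2 < d2) \sum_(b3 < d3) \sum_(b4 < d4)
     free_flow Bj Cjj a1 a2 a3 a4 b1 b2 b3 b4 * T j b1 b2 b3 b4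
  = tapp Bj (U j) a1 a2 * V j a3 a4 + U j a1 a2 * tapp Cjj (V j) a3 a4.
Proof.
rewrite /free_flow /mxtensor.
under eq_bigr => b1 _ do under eq_bigr => b2 _ do under eq_bigr => b3 _ do
  under eq_bigr => b4 _ do rewrite mulrDl.
rewrite S4_D; congr (_ + _).
  transitivity (\sum_(b1 < d1) \sum_(b2 < d2) \sum_(b3 < d3) \sum_(b4 < d4)
     ((Bj a1 a2 b1 b2 * U j b1 b2 * V j b3 b4) * (a3 == b3)%:R * (a4 == b4)%:R)).
    apply: eq_bigr => b1 _; apply: eq_bigr => b2 _; apply: eq_bigr => b3 _; apply: eq_bigr => b4 _.
    ring.
  transitivity (\sum_(b1 < d1) \sum_(b2 < d2) (Bj a1 a2 b1 b2 * U j b1 b2 * V j a3 a4)).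
    apply: eq_bigr => b1 _; apply: eq_bigr => b2 _.
    exact: (sum_delta2 (fun b3 b4 => Bj a1 a2 b1 b2 * U j b1 b2 * V j b3 b4)).
  rewrite /tapp mxE big_distrl /=; apply: eq_bigr => b1 _; rewrite big_distrl /=.
  by apply: eq_bigr => b2 _.
transitivity (\sum_(b1 < d1) \sum_(b2 < d2)
   ((U j b1 b2 * tapp Cjj (V j) a3 a4) * (a1 == b1)%:R * (a2 == b2)%:R)).
  apply: eq_bigr => b1 _; apply: eq_bigr => b2 _.
  rewrite /tapp mxE big_distrr /= big_distrl /= big_distrl /=; apply: eq_bigr => b3 _.
  rewrite big_distrr /= big_distrl /= big_distrl /=; apply: eq_bigr => b4 _.
  ring.
exact: (sum_delta2 (fun b1 b2 => U j b1 b2 * tapp Cjj (V j) a3 a4)).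
Qed.

End Terms.

Lemma entry3 (R : realType) m n (X S S' : 'M[R[i]]_(m, n)) (c c' : R[i]) a b :
  (X + c *: S + c' *: S') a b = X a b + c * S a b + c' * S' a b.
Proof. by rewrite !mxE. Qed.

Lemma lohe_tensorE (R : realType) N d1 d2 d3 d4 (k1 k2 : R)
  (B : 'I_N -> 'I_d1 -> 'I_d2 -> 'I_d1 -> 'I_d2 -> R[i])
  (Cj : 'I_N -> 'I_d3 -> 'I_d4 -> 'I_d3 -> 'I_d4 -> R[i])
  (U : 'I_N -> 'M[R[i]]_(d1, d2)) (V : 'I_N -> 'M[R[i]]_(d3, d4)) j a1 a2 a3 a4 :
  lohe_rhs (fun j => free_flow (B j) (Cj j)) (dmm_kappa k1 k2)
     (fun k => mxtensor (U k) (V k)) j a1 a2 a3 a4 =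
  dmm_rhs B k1 k2 U V j a1 a2 * V j a3 a4 + U j a1 a2 * dmm_rhs Cj k1 k2 V U j a3 a4.
Proof.
rewrite lohe_rhsE sum_kappa termFF term1 term2 term3 term4 /dmm_rhs !entry3.
ring.
Qed.


Section Part1.
Variable R : realType.
Local Notation C := R[i].

Lemma ReM (u v : C) : complex.Re (u * v) = complex.Re u * complex.Re v - complex.Im u * complex.Im v.
Proof. by case: u; case: v. Qed.
Lemma ImM (u v : C) : complex.Im (u * v) = complex.Re u * complex.Im v + complex.Im u * complex.Re v.
Proof. by case: u; case: v. Qed.
Lemma ReD (u v : C) : complex.Re (u + v) = complex.Re u + complex.Re v.
Proof. by case: u; case: v. Qed.
Lemma ImD (u v : C) : complex.Im (u + v) = complex.Im u + complex.Im v.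
Proof. by case: u; case: v. Qed.

Lemma cderivM (f g : R -> C) (t : R) (df dg : C) :
  cderiv f t df -> cderiv g t dg -> cderiv (fun s => f s * g s) t (df * g t + f t * dg).
Proof.
move=> [fr fi] [gr gi]; split.
  have h := is_deriveB (is_deriveM fr gr) (is_deriveM fi gi).
  have h2 := @is_derive_ext R _ (fun s => complex.Re (f s * g s)) t _ (fun u => esym (ReM (f u) (g u))) h.
  apply: (is_derive_eq h2); rewrite /GRing.scale /= ReD !ReM; ring.
have h := is_deriveD (is_deriveM fr gi) (is_deriveM fi gr).
have h2 := @is_derive_ext R _ (fun s => complex.Im (f s * g s)) t _ (fun u => esym (ImM (f u) (g u))) h.
apply: (is_derive_eq h2); rewrite /GRing.scale /= ImD !ImM; ring.
Qed.

Lemma ccont0M (f g : R -> C) : ccont0 f -> ccont0 g -> ccont0 (fun s => f s * g s).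
Proof.
move=> [fr fi] [gr gi]; split.
  have -> : (fun s => complex.Re (f s * g s)) =
     (fun s => complex.Re (f s) * complex.Re (g s) - complex.Im (f s) * complex.Im (g s)).
    by apply/funext => u; rewrite ReM.
  rewrite ReM; exact: (cvgB (cvgM fr gr) (cvgM fi gi)).
have -> : (fun s => complex.Im (f s * g s)) =
   (fun s => complex.Re (f s) * complex.Im (g s) + complex.Im (f s) * complex.Re (g s)).
  by apply/funext => u; rewrite ImM.
rewrite ImM; exact: (cvgD (cvgM fr gi) (cvgM fi gr)).
Qed.

Lemma part1 (N d1 d2 d3 d4 : nat) (k1 k2 : R)
  (B : 'I_N -> 'I_d1 -> 'I_d2 -> 'I_d1 -> 'I_d2 -> C)
  (Cj : 'I_N -> 'I_d3 -> 'I_d4 -> 'I_d3 -> 'I_d4 -> C)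
  (U : 'I_N -> R -> 'M[C]_(d1, d2)) (V : 'I_N -> R -> 'M[C]_(d3, d4)) :
  dmm_solution B Cj k1 k2 U V ->
  lohe_solution (fun j => free_flow (B j) (Cj j)) (dmm_kappa k1 k2)
    (fun j t => mxtensor (U j t) (V j t)).
Proof.
move=> [hU hV] j a1 a2 a3 a4; have [cU dU] := hU j a1 a2; have [cV dV] := hV j a3 a4.
split; first exact: ccont0M cU cV.
move=> t t0; rewrite lohe_tensorE.
exact: cderivM (dU t t0) (dV t t0).
Qed.

End Part1.

Section Norm.
Variable R : realType.
Local Notation C := R[i].

Lemma conjK (z : C) : Num.conj (Num.conj z) = z.
Proof. by case: z => a b; change ((a +i* (- - b))%C = (a +i* b)%C); rewrite opprK. Qed.

Lemma adjmxM m n p (A : 'M[C]_(m, n)) (B : 'M[C]_(n, p)) :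
  adjmx (A *m B) = adjmx B *m adjmx A.
Proof.
apply/matrixP => i j; rewrite !mxE rmorph_sum; apply: eq_bigr => k _.
by rewrite !mxE rmorphM mulrC.
Qed.

Lemma adjmxK m n (A : 'M[C]_(m, n)) : adjmx (adjmx A) = A.
Proof. by apply/matrixP => i j; rewrite !mxE conjK. Qed.

Lemma cmc (u v : C) : Num.conj (Num.conj u * v) = Num.conj v * u.
Proof.
case: u => a b; case: v => c d.
apply/eqP; rewrite eq_complex /=; apply/andP; split; apply/eqP; ring.
Qed.

Lemma frob_conj m n (A B : 'M[C]_(m, n)) : Num.conj (frob A B) = frob B A.
Proof.
rewrite !frobE rmorph_sum; apply: eq_bigr => a _; rewrite rmorph_sum.
apply: eq_bigr => b _; exact: cmc.
Qed.

Lemma frobD m n (A M M' : 'M[C]_(m, n)) : frob A (M + M') = frob A M + frob A M'.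
Proof. by rewrite /frob mulmxDr mxtraceD. Qed.

Lemma frobB m n (A M M' : 'M[C]_(m, n)) : frob A (M - M') = frob A M - frob A M'.
Proof. by rewrite /frob mulmxBr raddfB. Qed.

Lemma frobZ m n (A M : 'M[C]_(m, n)) c : frob A (c *: M) = c * frob A M.
Proof. by rewrite /frob -scalemxAr mxtraceZ. Qed.

Lemma frob_sum m n (A : 'M[C]_(m, n)) (K : finType) (M : K -> 'M[C]_(m, n)) :
  frob A (\sum_(k : K) M k) = \sum_(k : K) frob A (M k).
Proof. by rewrite /frob mulmx_sumr raddf_sum. Qed.

Lemma Re_sum (K : Type) (r : seq K) (P : pred K) (F : K -> C) :
  complex.Re (\sum_(k <- r | P k) F k) = \sum_(k <- r | P k) complex.Re (F k).
Proof. by elim/big_rec2 : _ => [|k y1 y2 _ <-]; rewrite ?ReD. Qed.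

Lemma Re_sub_conj (w : C) : complex.Re (w - Num.conj w) = 0.
Proof. by case: w => a b /=; rewrite subrr. Qed.

Lemma Re_realM (a : R) (z : C) : complex.Re ((a%:C)%C * z) = a * complex.Re z.
Proof. by case: z => x y /=; rewrite mul0r subr0. Qed.

Lemma id1 m n (X Xk : 'M[C]_(m, n)) :
  frob X (X *m adjmx Xk *m X) = Num.conj (frob X (Xk *m adjmx X *m X)).
Proof.
by rewrite frob_conj /frob !adjmxM adjmxK !mulmxA.
Qed.

Lemma id2 m n (X Xk : 'M[C]_(m, n)) :
  frob X (X *m adjmx Xk *m X) = Num.conj (frob X (X *m adjmx X *m Xk)).
Proof.
rewrite frob_conj /frob !adjmxM adjmxK !mulmxA.
rewrite -[adjmx X *m X *m adjmx Xk *m X]mulmxA mxtrace_mulC !mulmxA.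
by [].
Qed.

End Norm.

Section Cons.
Variable R : realType.
Local Notation C := R[i].

Section Sw.
Variables T1 T2 : finType.
Lemma swap4 (g : T1 -> T2 -> T1 -> T2 -> C) :
  \sum_(a : T1) \sum_(b : T2) \sum_(c : T1) \sum_(d : T2) g a b c d =
  \sum_(a : T1) \sum_(b : T2) \sum_(c : T1) \sum_(d : T2) g c d a b.
Proof.
transitivity (\sum_(a : T1) \sum_(c : T1) \sum_(b : T2) \sum_(d : T2) g a b c d).
  by apply: eq_bigr => a _; exact: exchange_big.
transitivity (\sum_(a : T1) \sum_(c : T1) \sum_(d : T2) \sum_(b : T2) g a b c d).
  by apply: eq_bigr => a _; apply: eq_bigr => c _; exact: exchange_big.
rewrite exchange_big; apply: eq_bigr => c _; exact: exchange_big.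
Qed.

Lemma conj_S4 (f : T1 -> T2 -> T1 -> T2 -> C) :
  Num.conj (\sum_(a : T1) \sum_(b : T2) \sum_(c : T1) \sum_(d : T2) f a b c d) =
  \sum_(a : T1) \sum_(b : T2) \sum_(c : T1) \sum_(d : T2) Num.conj (f a b c d).
Proof.
rewrite rmorph_sum; apply: eq_bigr => a _; rewrite rmorph_sum; apply: eq_bigr => b _.
rewrite rmorph_sum; apply: eq_bigr => c _; by rewrite rmorph_sum.
Qed.

Lemma opp_S4 (f : T1 -> T2 -> T1 -> T2 -> C) :
  - (\sum_(a : T1) \sum_(b : T2) \sum_(c : T1) \sum_(d : T2) f a b c d) =
  \sum_(a : T1) \sum_(b : T2) \sum_(c : T1) \sum_(d : T2) - (f a b c d).
Proof.
rewrite -sumrN; apply: eq_bigr => a _; rewrite -sumrN; apply: eq_bigr => b _.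
rewrite -sumrN; apply: eq_bigr => c _; by rewrite -sumrN.
Qed.
End Sw.

Lemma Re_conjN (w : C) : Num.conj w = - w -> complex.Re w = 0.
Proof.
case: w => x y /eqP; rewrite eq_complex /= => /andP [/eqP h _].
have : x + x = 0 by rewrite {1}h addNr.
by move=> hx; apply/eqP; move: hx; rewrite -mulr2n -mulr_natr => /eqP; rewrite mulf_eq0 pnatr_eq0 orbF.
Qed.

Lemma conj3 (u v w : C) : Num.conj (Num.conj u * - Num.conj v * w) = - (Num.conj w * v * u).
Proof.
case: u => a b; case: v => c d; case: w => e f.
apply/eqP; rewrite eq_complex /=; apply/andP; split; apply/eqP; ring.
Qed.

Lemma Re_frob_tapp m n (Bm : 'I_m -> 'I_n -> 'I_m -> 'I_n -> C)
  (hB : forall a b c d, Bm a b c d = - Num.conj (Bm c d a b)) (X : 'M[C]_(m, n)) :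
  complex.Re (frob X (tapp Bm X)) = 0.
Proof.
have e : frob X (tapp Bm X) = \sum_(a < m) \sum_(b < n) \sum_(c < m) \sum_(d < n)
            Num.conj (X a b) * Bm a b c d * X c d.
  rewrite frobE; apply: eq_bigr => a _; apply: eq_bigr => b _.
  rewrite mxE big_distrr /=; apply: eq_bigr => c _; rewrite big_distrr /=.
  by apply: eq_bigr => d _; rewrite mulrA.
apply: Re_conjN; rewrite e conj_S4 opp_S4 swap4.
apply: eq_bigr => a _; apply: eq_bigr => b _; apply: eq_bigr => c _; apply: eq_bigr => d _.
by rewrite (hB c d a b) conj3.
Qed.

Lemma Re_sub_conj2 (c w : C) : complex.Re (c * w - Num.conj c * Num.conj w) = 0.
Proof. case: c => a b; case: w => x y /=; ring. Qed.

Lemma Re_frob_k1 N m n p q (X : 'I_N -> 'M[C]_(m, n)) (Y : 'I_N -> 'M[C]_(p, q)) j :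
  complex.Re (frob (X j) (\sum_(k < N)
      (frob (Y j) (Y k) *: (X k *m adjmx (X j) *m X j)
       - frob (Y k) (Y j) *: (X j *m adjmx (X k) *m X j)))) = 0.
Proof.
rewrite frob_sum Re_sum big1 // => k _.
rewrite frobB !frobZ -(frob_conj (Y j) (Y k)) id1.
exact: Re_sub_conj2.
Qed.

Lemma Re_frob_k2 N m n p q (X : 'I_N -> 'M[C]_(m, n)) (Y : 'I_N -> 'M[C]_(p, q)) j :
  complex.Re (frob (X j) (\sum_(k < N)
      (frob (Y j) (Y k) *: (X j *m adjmx (X j) *m X k)
       - frob (Y k) (Y j) *: (X j *m adjmx (X k) *m X j)))) = 0.
Proof.
rewrite frob_sum Re_sum big1 // => k _.
rewrite frobB !frobZ -(frob_conj (Y j) (Y k)) id2.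
exact: Re_sub_conj2.
Qed.

Lemma Re_frob_gen m n (X T S1 S2 : 'M[C]_(m, n)) (c1 c2 : R) :
  complex.Re (frob X T) = 0 -> complex.Re (frob X S1) = 0 -> complex.Re (frob X S2) = 0 ->
  complex.Re (frob X (T + ((c1%:C)%C) *: S1 + ((c2%:C)%C) *: S2)) = 0.
Proof.
move=> h1 h2 h3.
by rewrite frobD frobD frobZ frobZ !ReD !Re_realM h1 h2 h3 !mulr0 !addr0.
Qed.

Lemma Re_frob_rhs N m n p q (k1 k2 : R)
  (Bm : 'I_N -> 'I_m -> 'I_n -> 'I_m -> 'I_n -> C)
  (hB : forall j a b c d, Bm j a b c d = - Num.conj (Bm j c d a b))
  (X : 'I_N -> 'M[C]_(m, n)) (Y : 'I_N -> 'M[C]_(p, q)) j :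
  complex.Re (frob (X j) (dmm_rhs Bm k1 k2 X Y j)) = 0.
Proof.
have hr : forall k : R, ((k%:C)%C / N%:R : C) = (((k / N%:R)%:C)%C).
  by move=> k; rewrite fmorph_div (rmorph_nat (real_complex R)).
rewrite /dmm_rhs !hr; apply: Re_frob_gen.
- exact: Re_frob_tapp.
- exact: Re_frob_k1.
- exact: Re_frob_k2.
Qed.

End Cons.

Section NormC.
Variable R : realType.
Local Notation C := R[i].

Lemma is_derive_sq (g : R -> R) (a s : R) :
  is_derive s (1 : R) g a -> is_derive s (1 : R) (fun u => g u ^+ 2) (2 * g s * a).
Proof.
move=> hg; have h := is_deriveM hg hg.
have h2 := is_derive_eq h (_ : _ = 2 * g s * a).
apply: (@is_derive_ext _ _ _ s _ _ (h2 _)) => [u|]; first by rewrite expr2.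
rewrite /GRing.scale /=; ring.
Qed.

Lemma Re_conjM (z w : C) : complex.Re (Num.conj z * w) =
  complex.Re z * complex.Re w + complex.Im z * complex.Im w.
Proof. case: z => a b; case: w => c d /=; ring. Qed.

Lemma norm_const N m n p q (k1 k2 : R)
  (Bm : 'I_N -> 'I_m -> 'I_n -> 'I_m -> 'I_n -> C)
  (hB : forall j a b c d, Bm j a b c d = - Num.conj (Bm j c d a b))
  (X : 'I_N -> R -> 'M[C]_(m, n)) (Y : 'I_N -> R -> 'M[C]_(p, q)) :
  (forall j a b, ccont0 (fun s => X j s a b) /\ forall t : R, 0 < t ->
     cderiv (fun s => X j s a b) t
       (dmm_rhs Bm k1 k2 (fun k => X k t) (fun k => Y k t) j a b)) ->
  forall j (t : R), 0 < t ->
    complex.Re (frob (X j t) (X j t)) = complex.Re (frob (X j 0) (X j 0)).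
Proof.
move=> hX j t t0.
pose f (s : R) := \sum_(a < m) \sum_(b < n)
   (complex.Re (X j s a b) ^+ 2 + complex.Im (X j s a b) ^+ 2).
have hf : forall s, complex.Re (frob (X j s) (X j s)) = f s.
  move=> s; rewrite frobE Re_sum; apply: eq_bigr => a _; rewrite Re_sum.
  by apply: eq_bigr => b _; rewrite Re_conjM !expr2.
have df : forall s : R, 0 < s -> is_derive s (1 : R) f 0.
  move=> s s0.
  have h : is_derive s (1 : R) f
     (\sum_(a < m) \sum_(b < n)
       (2 * complex.Re (X j s a b) *
           complex.Re (dmm_rhs Bm k1 k2 (fun k => X k s) (fun k => Y k s) j a b)
        + 2 * complex.Im (X j s a b) *
           complex.Im (dmm_rhs Bm k1 k2 (fun k => X k s) (fun k => Y k s) j a b))).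
    apply: is_derive_bsum => a; apply: is_derive_bsum => b.
    have [_ hd] := hX j a b; have [hr hi] := hd s s0.
    exact: is_deriveD (is_derive_sq hr) (is_derive_sq hi).
  apply: (is_derive_eq h).
  have e := Re_frob_rhs k1 k2 hB (fun k => X k s) (fun k => Y k s) j.
  have e2 : 2 * complex.Re (frob (X j s)
     (dmm_rhs Bm k1 k2 (fun k => X k s) (fun k => Y k s) j)) = 0 by rewrite e mulr0.
  rewrite -[RHS]e2 frobE Re_sum mulr_sumr.
  apply: eq_bigr => a _; rewrite Re_sum mulr_sumr; apply: eq_bigr => b _.
  rewrite Re_conjM; ring.
have pf : PC f.
  apply: PC_sum => a; apply: PC_sum => b; have [c0 hd] := hX j a b.
  apply: PCD.
    apply: (@PC_ext _ (fun s => complex.Re (X j s a b) * complex.Re (X j s a b))).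
      by move=> s; rewrite expr2.
    by apply: PCM; exact: (PC_Re c0 hd).
  apply: (@PC_ext _ (fun s => complex.Im (X j s a b) * complex.Im (X j s a b))).
    by move=> s; rewrite expr2.
  by apply: PCM; exact: (PC_Im c0 hd).
have fw := PC_within t0 pf.
have hd1 : forall x, x \in `]0, t[%R -> derivable f x 1.
  move=> x; rewrite in_itv /= => /andP [x0 _]; by case: (df x x0).
have hd2 : forall x, x \in `]0, t[%R -> f^`() x = 0.
  move=> x; rewrite in_itv /= => /andP [x0 _].
  by rewrite derive1E (@derive_val _ _ _ _ _ _ _ (df x x0)).
have le1 : f t <= f 0.
  apply: (ler0_derive1_nincr hd1 _ fw); rewrite ?lexx ?(ltW t0) //.
  by move=> x hx; rewrite hd2.
have le2 : f 0 <= f t.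
  apply: (ger0_derive1_ndecr hd1 _ fw); rewrite ?lexx ?(ltW t0) //.
  by move=> x hx; rewrite hd2.
rewrite !hf; apply/eqP; rewrite eq_le le1 le2 //.
Qed.

End NormC.

Close Scope classical_set_scope.
Unset Implicit Arguments.

Theorem proposition3p1 (R : realType) (N d1 d2 d3 d4 : nat) (k1 k2 : R)
  (B : 'I_N -> 'I_d1 -> 'I_d2 -> 'I_d1 -> 'I_d2 -> R[i])
  (Cj : 'I_N -> 'I_d3 -> 'I_d4 -> 'I_d3 -> 'I_d4 -> R[i]) :
  (0 < N)%N -> (0 < d1)%N -> (0 < d2)%N -> (0 < d3)%N -> (0 < d4)%N ->
  0 <= k1 -> 0 <= k2 ->
  (forall j a1 b1 a2 b2, B j a1 b1 a2 b2 = - Num.conj (B j a2 b2 a1 b1)) ->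
  (forall j g1 e1 g2 e2, Cj j g1 e1 g2 e2 = - Num.conj (Cj j g2 e2 g1 e1)) ->
  (* (1) *)
  (forall (U : 'I_N -> R -> 'M[R[i]]_(d1, d2))
          (V : 'I_N -> R -> 'M[R[i]]_(d3, d4)),
     dmm_solution B Cj k1 k2 U V ->
     lohe_solution (fun j => free_flow (B j) (Cj j)) (dmm_kappa k1 k2)
       (fun j t => mxtensor (U j t) (V j t)))
  /\
  (* (2) *)
  (forall (T : 'I_N -> R -> tensor4 R d1 d2 d3 d4)
          (U0 : 'I_N -> 'M[R[i]]_(d1, d2)) (V0 : 'I_N -> 'M[R[i]]_(d3, d4))
          (U : 'I_N -> R -> 'M[R[i]]_(d1, d2))
          (V : 'I_N -> R -> 'M[R[i]]_(d3, d4)),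
     lohe_solution (fun j => free_flow (B j) (Cj j)) (dmm_kappa k1 k2) T ->
     (forall j, T j 0 = mxtensor (U0 j) (V0 j)) ->
     (forall j, frob_norm (U0 j) = 1 /\ frob_norm (V0 j) = 1) ->
     dmm_solution B Cj k1 k2 U V ->
     (forall j, U j 0 = U0 j /\ V j 0 = V0 j) ->
     forall j (t : R), 0 < t ->
       T j t = mxtensor (U j t) (V j t) /\
       frob_norm (U j t) = 1 /\ frob_norm (V j t) = 1).
Proof.
move=> _ _ _ _ _ _ _ hB hC; split; first exact: part1.
move=> T U0 V0 U V hT hT0 hn hUV hUV0 j t t0.
have hS := part1 hUV.
pose A := fun j => free_flow (B j) (Cj j).
pose x (s : R) : ('I_N * 'I_d1 * 'I_d2 * 'I_d3 * 'I_d4)%type -> R[i] :=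
  fun i => let: (k, b1, b2, b3, b4) := i in T k s b1 b2 b3 b4.
pose y (s : R) : ('I_N * 'I_d1 * 'I_d2 * 'I_d3 * 'I_d4)%type -> R[i] :=
  fun i => let: (k, b1, b2, b3, b4) := i in mxtensor (U k s) (V k s) b1 b2 b3 b4.
pose F (z : ('I_N * 'I_d1 * 'I_d2 * 'I_d3 * 'I_d4)%type -> R[i])
       (i : ('I_N * 'I_d1 * 'I_d2 * 'I_d3 * 'I_d4)%type) : R[i] :=
  let: (k, a1, a2, a3, a4) := i in lohe_rhs A (dmm_kappa k1 k2) (tens z) k a1 a2 a3 a4.
have hxy : x t = y t.
  apply: (@ode_unique R _ F x y t) => //.
  - by move=> [[[[k a1] a2] a3] a4]; exact: Lip_lohe.
  - by move=> [[[[k a1] a2] a3] a4]; exact: (hT k a1 a2 a3 a4).1.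
  - by move=> [[[[k a1] a2] a3] a4]; exact: (hS k a1 a2 a3 a4).1.
  - by move=> [[[[k a1] a2] a3] a4] s s0; exact: (hT k a1 a2 a3 a4).2 s s0.
  - by move=> [[[[k a1] a2] a3] a4] s s0; exact: (hS k a1 a2 a3 a4).2 s s0.
  - apply/funext => -[[[[k a1] a2] a3] a4] /=.
    by rewrite hT0 (hUV0 k).1 (hUV0 k).2.
split.
  apply/funext => a1; apply/funext => a2; apply/funext => a3; apply/funext => a4.
  exact: (congr1 (fun f => f (j, a1, a2, a3, a4)) hxy).
have [hU hV] := hUV.
have nU := norm_const hB hU j t0.
have nV := norm_const hC hV j t0.
rewrite /frob_norm nU nV (hUV0 j).1 (hUV0 j).2.
by have [h1 h2] := hn j.
Qed.
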